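(* Let $(T,A,m|_A)$ be a nonsingular open dynamical system with $m(A_\infty)=0$. Fix $\alpha\in(0,1)$ and a finite measurable partition $\mathcal B_n=\{B_1,\dots,B_n\}$ of $A$, and let $\hat A$ be the reduced domain obtained with test functions $\psi_j=\mathbf 1_{B_j}$. Then $\hat A$ is the union of those $B_k$ for which either $k\leadsto k$, or there is at least one $i$ with $i\leadsto i$ and $i\leadsto k$. In particular, $\hat A$ is measurable.
   Context: Let $(X,m)$ be a measure space, $A\subsetneq X$ measurable and $T:A\to X$ measurable such that: $H_0:=T(A)\setminus A$ is measurable; $m(A\cap T^{-1}H_0)>0$; $m(E)>0$ whenever $E\subseteq X$ is measurable with $m(T^{-1}E)>0$; and $T$ is locally finite-to-one (a nonsingular open dynamical system). Preimages are taken in $A$: $T^{-1}E=\{y\in A:T(y)\in E\}$. $A_n=\{x:x,T(x),\dots,T^n(x)\in A\}$, $A_\infty=\bigcap_nA_n$, $H_1=A\setminus A_1$. $\mathbf 1_{A_1}\psi\circ T$ is $\psi\circ T$ on $A_1$ and $0$ elsewhere in $A$. Define $\mathcal M^*:\mathbb R^{n+1}\to L^\infty(A;m)$ by $\mathcal M^*\lambda=\lambda_0\mathbf 1_{A_1}+\sum_{j=1}^n\lambda_j(\mathbf 1_{A_1}\psi_j\circ T-\alpha\psi_j)$ with $\psi_j=\mathbf 1_{B_j}$. The reduced domain $\hat A$ is obtained from $A$ by removing the support $\{\mathcal M^*\lambda\neq0\}$ of every $\mathcal M^*\lambda$ with $\lambda\in\mathbb R^{n+1}$, $\lambda_0=0$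 and $\mathcal M^*\lambda\le0$ $m$-a.e. Let $C$ be the $n\times n$ matrix $C_{kj}=m(B_k\cap T^{-1}B_j)$. Write $k\leadsto j$ if $(C^N)_{kj}>0$ for some integer $N>0$. *)

(* Defs.v *)
From HB Require Import structures.
From mathcomp Require Import all_boot all_order all_algebra.
From mathcomp Require Import all_classical all_reals all_analysis.
Set Implicit Arguments. Unset Strict Implicit. Unset Printing Implicit Defensive.
Import Order.TTheory GRing.Theory Num.Theory.
Local Open Scope classical_set_scope.
Local Open Scope ring_scope.

Definition preA {X : Type} (A : set X) (T : X -> X) (E : set X) : set X :=
  A `&` T @^-1` E.

Definition An {X : Type} (A : set X) (T : X -> X) (n : nat) : set X :=
  [set x | forall i, (i <= n)%N -> A (iter i T x)].

Definition Ainf {X : Type} (A : set X) (T : X -> X) : set X :=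
  \bigcap_(n in setT) An A T n.

Definition locally_finite_to_one {d} {X : measurableType d}
    (A : set X) (T : X -> X) : Prop :=
  exists F : nat -> set X,
    (forall i, measurable (F i)) /\ A = \bigcup_i F i /\
    (forall i x y, F i x -> F i y -> T x = T y -> x = y).

Definition nonsingular_open_system {d} {X : measurableType d} {R : realType}
    (m : {measure set X -> \bar R}) (A : set X) (T : X -> X) : Prop :=
  measurable A /\ A `<` setT /\ measurable_fun A T /\
  measurable (T @` A `\` A) /\
  (0 < m (preA A T (T @` A `\` A)))%E /\
  (forall E, measurable E -> (0 < m (preA A T E))%E -> (0 < m E)%E) /\
  locally_finite_to_one A T.

(* M^* lambda, as a function on A (value at points x of A);
   lambda = (lam ord0, lam (lift ord0 j))_{j < n}, psi_j = 1_{B_j}. *)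
Definition Mstar {X : Type} {R : realType} (A : set X) (T : X -> X)
    (alpha : R) (n : nat) (B : 'I_n -> set X) (lam : 'I_n.+1 -> R) (x : X) : R :=
  lam ord0 * \1_(An A T 1) x +
  \sum_(j < n) lam (lift ord0 j) *
      (\1_(An A T 1) x * \1_(B j) (T x) - alpha * \1_(B j) x).

Definition admissible {d} {X : measurableType d} {R : realType}
    (m : {measure set X -> \bar R}) (A : set X) (T : X -> X)
    (alpha : R) (n : nat) (B : 'I_n -> set X) (lam : 'I_n.+1 -> R) : Prop :=
  lam ord0 = 0 /\ {ae m, forall x, A x -> Mstar A T alpha B lam x <= 0}.

Definition Msupp {X : Type} {R : realType} (A : set X) (T : X -> X)
    (alpha : R) (n : nat) (B : 'I_n -> set X) (lam : 'I_n.+1 -> R) : set X :=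
  [set x | A x /\ Mstar A T alpha B lam x != 0].

(* Ahat is (a version, mod m-null sets, of) the reduced domain: A \ Ahat is
   the essential union of the supports of all admissible M^* lambda, i.e.
   every such support is a.e. disjoint from Ahat, and any measurable set
   a.e. containing all such supports a.e. contains A \ Ahat. *)
Definition reduced_domain {d} {X : measurableType d} {R : realType}
    (m : {measure set X -> \bar R}) (A : set X) (T : X -> X)
    (alpha : R) (n : nat) (B : 'I_n -> set X) (Ahat : set X) : Prop :=
  [/\ Ahat `<=` A,
      (forall lam, admissible m A T alpha B lam ->
         m.-negligible (Ahat `&` Msupp A T alpha B lam))
    & (forall S, measurable S ->
         (forall lam, admissible m A T alpha B lam ->
            m.-negligible (Msupp A T alpha B lam `\` S)) ->
         m.-negligible ((A `\` Ahat) `\` S))].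

Definition Cmat {d} {X : measurableType d} {R : realType}
    (m : {measure set X -> \bar R}) (A : set X) (T : X -> X)
    (n : nat) (B : 'I_n -> set X) (k j : 'I_n) : \bar R :=
  m (B k `&` preA A T (B j)).

Fixpoint Cpow {d} {X : measurableType d} {R : realType}
    (m : {measure set X -> \bar R}) (A : set X) (T : X -> X)
    (n : nat) (B : 'I_n -> set X) (N : nat) (k j : 'I_n) : \bar R :=
  match N with
  | 0 => if k == j then 1%E else 0%E
  | N'.+1 => (\sum_(l < n) Cpow m A T B N' k l * Cmat m A T B l j)%E
  end.

Definition leadsto {d} {X : measurableType d} {R : realType}
    (m : {measure set X -> \bar R}) (A : set X) (T : X -> X)
    (n : nat) (B : 'I_n -> set X) (k j : 'I_n) : Prop :=
  exists N : nat, (0 < N)%N /\ (0 < Cpow m A T B N k j)%E.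

(* Main.v *)
Require Import Defs.
From HB Require Import structures.
From mathcomp Require Import all_boot all_order all_algebra.
From mathcomp Require Import all_classical all_reals all_analysis.
From mathcomp Require Import ring lra.
Import Order.TTheory GRing.Theory Num.Theory.
Local Open Scope classical_set_scope.
Local Open Scope ring_scope.
Set Implicit Arguments. Unset Strict Implicit. Unset Printing Implicit Defensive.

Section Reach.
Context (R : realType) (d : measure_display) (X : measurableType d)
    (m : {measure set X -> \bar R}) (A : set X) (T : X -> X)
    (n : nat) (B : 'I_n -> set X).

Definition edge (k j : 'I_n) : Prop := (0 < Cmat m A T B k j)%E.

Fixpoint reachN (N : nat) (k j : 'I_n) : Prop :=
  match N with
  | 0 => k = j
  | N'.+1 => exists l, reachN N' k l /\ edge l j
  end.

Lemma Cmat_ge0 k j : (0 <= Cmat m A T B k j)%E.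
Proof. exact: measure_ge0. Qed.

Lemma Cpow_ge0 N k j : (0 <= Cpow m A T B N k j)%E.
Proof.
elim: N j => [|N IH] j /=; first by case: ifP.
by apply: sume_ge0 => l _; apply: mule_ge0 => //; exact: Cmat_ge0.
Qed.

Lemma Cpow_gt0 N k j : (0 < Cpow m A T B N k j)%E <-> reachN N k j.
Proof.
elim: N j => [|N IH] j /=.
  by case: eqP => [->|kj]; split => //; rewrite ?lte01 ?ltxx.
split.
  move=> H; apply: contrapT => /forallNP Hn.
  move: H; rewrite big1 ?ltxx // => l _.
  apply/eqP; rewrite eq_le mule_ge0 ?Cpow_ge0 ?Cmat_ge0 // andbT leNgt.
  apply/negP; rewrite mule_ge0_gt0 ?Cpow_ge0 ?Cmat_ge0 // => /andP[h1 h2].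
  by apply: (Hn l); split => //; apply/IH.
move=> [l [H1 H2]].
rewrite (bigD1 l) //=.
apply: (@lt_le_trans _ _ (Cpow m A T B N k l * Cmat m A T B l j)%E).
  by rewrite mule_gt0 //; apply/IH.
rewrite leeDl //; apply: sume_ge0 => i _; apply: mule_ge0.
  exact: Cpow_ge0. exact: Cmat_ge0.
Qed.

Lemma reachN_cons N k j l : edge k j -> reachN N j l -> reachN N.+1 k l.
Proof.
elim: N l => [|N IH] l /= kj.
  by move=> <-; exists k.
by move=> [l' [H1 H2]]; exists l'; split => //; exact: IH.
Qed.

Lemma leadstoP k j : leadsto m A T B k j <-> exists N, (0 < N)%N /\ reachN N k j.
Proof.
split=> [[N [N0 H]]|[N [N0 H]]]; exists N; split => //; exact/Cpow_gt0.
Qed.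

Lemma leadsto_edge i k j : leadsto m A T B i k -> edge k j -> leadsto m A T B i j.
Proof.
move=> /leadstoP [N [N0 H]] kj; apply/leadstoP; exists N.+1; split => //.
by exists k.
Qed.

Lemma leadsto_cons k j l : edge k j -> leadsto m A T B j l -> leadsto m A T B k l.
Proof.
move=> kj /leadstoP [N [N0 H]]; apply/leadstoP; exists N.+1; split => //.
exact: reachN_cons H.
Qed.

Lemma edge_leadsto k j : edge k j -> leadsto m A T B k j.
Proof. by move=> kj; apply/leadstoP; exists 1%N; split => //; exists k. Qed.

Definition Gp (k : 'I_n) : Prop :=
  leadsto m A T B k k \/ exists i, leadsto m A T B i i /\ leadsto m A T B i k.

Lemma Gp_edge k j : Gp k -> edge k j -> Gp j.
Proof.
move=> [kk|[i [ii ik]]] kj; right.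
  by exists k; split => //; exact: leadsto_edge kj.
by exists i; split => //; exact: leadsto_edge kj.
Qed.

Lemma leadsto_in k j : leadsto m A T B k j -> exists l, edge l j.
Proof.
move=> /leadstoP [[|N] [N0 H]] //=.
by case: H => l [_ lj]; exists l.
Qed.

End Reach.

Section Formula.
Context (R : realType) (X : Type) (A : set X) (T : X -> X) (alpha : R)
    (n : nat) (B : 'I_n -> set X).
Hypothesis Bdisj : forall k l, k != l -> B k `&` B l = set0.
Hypothesis Bcov : \bigcup_k B k = A.

Lemma BsubA k : B k `<=` A.
Proof. by rewrite -Bcov => x Bx; exists k. Qed.

Lemma An1P x : An A T 1 x <-> A x /\ A (T x).
Proof.
split => [H|[H1 H2] [|[|i]] //]; split; [exact: (H 0%N)|exact: (H 1%N)].
Qed.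

Definition Ssum (lam : 'I_n.+1 -> R) (y : X) : R :=
  \sum_(j < n) lam (lift ord0 j) * \1_(B j) y.

Lemma Ssum_in lam y j : B j y -> Ssum lam y = lam (lift ord0 j).
Proof.
move=> Bj; rewrite /Ssum (bigD1 j) //= big1 => [|i ij].
  by rewrite indicE mem_set // mulr1 addr0.
rewrite indicE memNset ?mulr0 // => Bi.
have := Bdisj ij; rewrite -subset0 => /(_ y); apply; by split.
Qed.

Lemma Ssum_out lam y : ~ A y -> Ssum lam y = 0.
Proof.
move=> Ay; rewrite /Ssum big1 // => i _.
by rewrite indicE memNset ?mulr0 // => /BsubA.
Qed.

Lemma Mstar_eq lam x : lam ord0 = 0 ->
  Mstar A T alpha B lam x = \1_(An A T 1) x * Ssum lam (T x) - alpha * Ssum lam x.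
Proof.
move=> l0; rewrite /Mstar l0 mul0r add0r /Ssum mulr_sumr [alpha * _]mulr_sumr.
rewrite -sumrB; apply: eq_bigr => j _; ring.
Qed.

Lemma Mstar_out lam x k : lam ord0 = 0 -> B k x -> ~ A (T x) ->
  Mstar A T alpha B lam x = - (alpha * lam (lift ord0 k)).
Proof.
move=> l0 Bk nA; rewrite Mstar_eq // (Ssum_in _ Bk) Ssum_out // mulr0 sub0r //.
Qed.

Lemma Mstar_in lam x k j : lam ord0 = 0 -> B k x -> B j (T x) ->
  Mstar A T alpha B lam x = lam (lift ord0 j) - alpha * lam (lift ord0 k).
Proof.
move=> l0 Bk Bj; rewrite Mstar_eq // (Ssum_in _ Bk) (Ssum_in _ Bj).
rewrite indicE mem_set ?mul1r //; apply/An1P; split; exact: BsubA Bj || exact: BsubA Bk.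
Qed.

Lemma coverP x : A x -> exists k, B k x.
Proof. by rewrite -Bcov => -[k _ Bk]; exists k. Qed.

End Formula.

Section Meas.
Context (R : realType) (d : measure_display) (X : measurableType d)
    (m : {measure set X -> \bar R}).

Lemma ae_ex (P : X -> Prop) : {ae m, forall x, P x} ->
  exists N, [/\ measurable N, m N = 0%E & forall x, ~ N x -> P x].
Proof.
move=> [N [mN N0 sub]]; exists N; split => // x Nx.
by apply: contrapT => Px; apply: Nx; apply: sub.
Qed.

Lemma ex_ae (P : X -> Prop) N : measurable N -> m N = 0%E ->
  (forall x, ~ N x -> P x) -> {ae m, forall x, P x}.
Proof.
move=> mN N0 H; exists N; split => // x /= Px; apply: contrapT => Nx.
by apply: Px; apply: H.
Qed.

Lemma negl_exists n (P : 'I_n -> set X) :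
  (forall k, m.-negligible (P k)) -> m.-negligible [set x | exists k, P k x].
Proof.
move=> HP.
pose Q (i : nat) : set X := match insub i with Some k => P k | None => set0 end.
apply: (@negligibleS _ _ _ _ (\bigcup_i Q i)).
  by move=> x [k Pk]; exists (val k) => //; rewrite /Q valK.
apply: negligible_bigcup => i; rewrite /Q; case: insub => [k|]; first exact: HP.
exact: negligible_set0.
Qed.

End Meas.

Section Adm.
Context (R : realType) (d : measure_display) (X : measurableType d)
    (m : {measure set X -> \bar R}) (A : set X) (T : X -> X) (alpha : R)
    (n : nat) (B : 'I_n -> set X).
Hypothesis mA : measurable A.
Hypothesis mT : measurable_fun A T.
Hypothesis nonsing : forall E, measurable E -> (0 < m (preA A T E))%E -> (0 < m E)%E.
Hypothesis Ainf0 : m (Ainf A T) = 0%E.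
Hypothesis a0 : 0 < alpha.
Hypothesis a1 : alpha < 1.
Hypothesis Bmeas : forall k, measurable (B k).
Hypothesis Bdisj : forall k l, k != l -> B k `&` B l = set0.
Hypothesis Bcov : \bigcup_k B k = A.

Lemma preA_meas E : measurable E -> measurable (preA A T E).
Proof. exact: mT. Qed.

Lemma preA_null E : measurable E -> m E = 0%E -> m (preA A T E) = 0%E.
Proof.
move=> mE E0; apply/eqP; rewrite eq_le measure_ge0 andbT leNgt; apply/negP.
by move=> /(nonsing mE); rewrite E0 ltxx.
Qed.

Lemma An_succ k : An A T k.+1 = preA A T (An A T k).
Proof.
apply/seteqP; split => x.
  move=> H; split; first exact: (H 0%N).
  by move=> i ik; rewrite /= -iterSr; apply: H.
move=> [Ax H] [|i] // ik; rewrite iterSr; exact: H.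
Qed.

Lemma An_meas k : measurable (An A T k).
Proof.
elim: k => [|k IH]; last by rewrite An_succ; exact: preA_meas.
have -> : An A T 0 = A.
  apply/seteqP; split => x; first by move=> /(_ 0%N (leqnn 0)).
  by move=> Ax [|i].
exact: mA.
Qed.

Lemma Ainf_meas : measurable (Ainf A T).
Proof.
rewrite /Ainf.
by apply: bigcapT_measurable => k; exact: An_meas.
Qed.

Variable lam : 'I_n.+1 -> R.
Hypothesis adm : admissible m A T alpha B lam.
Let mu j := lam (lift ord0 j).

Lemma adm_edge k j : edge m A T B k j -> mu j <= alpha * mu k.
Proof.
case: adm => l0 /ae_ex [N [mN N0 HN]] kj; rewrite leNgt; apply/negP => H.
move: kj; rewrite /edge /Cmat.
have mS : measurable (B k `&` preA A T (B j)) by apply: measurableI => //; exact: preA_meas.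
have : (m (B k `&` preA A T (B j)) <= m N)%E.
  apply: le_measure; rewrite ?inE //.
  move=> x [Bk [Ax Bj]]; apply: contrapT => Nx.
  have := HN x Nx Ax; rewrite (Mstar_in (T:=T) alpha Bdisj Bcov l0 Bk Bj).
  by rewrite leNgt subr_gt0 H.
by rewrite N0 => /le_lt_trans h /h; rewrite ltxx.
Qed.

Fixpoint Pit (N : set X) (i : nat) : set X :=
  match i with 0 => N | i'.+1 => preA A T (Pit N i') end.

Lemma adm_neg k : mu k < 0 -> m (B k) = 0%E.
Proof.
case: adm => l0 /ae_ex [N [mN N0 HN]] muk.
pose Neg := \bigcup_(j in [set j | mu j < 0]) B j.
have NegA : Neg `<=` A by move=> x [j _ Bj]; exact: (BsubA Bcov Bj).
have step : forall x, Neg x -> ~ N x -> Neg (T x).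
  move=> x [k' /= mk' Bk'] Nx.
  have Ax := BsubA Bcov Bk'.
  have Hx := HN x Nx Ax.
  have [ATx|nATx] := pselect (A (T x)); last first.
    move: Hx; rewrite (Mstar_out (T:=T) alpha Bdisj Bcov l0 Bk' nATx) oppr_le0 => h.
    have : alpha * mu k' < 0 by rewrite pmulr_rlt0.
    rewrite /mu; lra.
  have [j Bj] := coverP Bcov ATx.
  exists j => //=; move: Hx; rewrite (Mstar_in (T:=T) alpha Bdisj Bcov l0 Bk' Bj) //.
  have : alpha * mu k' < 0 by rewrite pmulr_rlt0.
  rewrite /mu; lra.
have mPit : forall i, measurable (Pit N i).
  by elim => [|i IH] //=; exact: preA_meas.
have Pit0 : forall i, m (Pit N i) = 0%E.
  by elim => [|i IH] //=; exact: preA_null.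
have key : forall i x, Neg x -> (forall t, (t <= i)%N -> ~ Pit N t x) -> A (iter i T x).
  elim => [|i IH] x Nx Hx; first exact: NegA.
  rewrite iterSr; apply: IH; first by apply: step => //; exact: (Hx 0%N).
  move=> t ti Pt; apply: (Hx t.+1 ti) => /=; split => //; exact: NegA.
have NegS : Neg `<=` Ainf A T `|` \bigcup_i Pit N i.
  move=> x Nx; have [[i _ Pi]|nP] := pselect ((\bigcup_i Pit N i) x); first by right; exists i.
  left; move=> k' _; change (forall i, (i <= k')%N -> A (iter i T x)).
  move=> i _; apply: key => // t _ Pt; by apply: nP; exists t.
have NegN : m.-negligible Neg.
  apply: (negligibleS (mu:=m) NegS); apply: negligibleU.
    by apply/(negligibleP m Ainf_meas).
  by apply: negligible_bigcup => i; apply/(negligibleP m (mPit i)); exact: Pit0.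
have : m.-negligible (B k).
  by apply: (negligibleS (mu:=m) _ NegN) => y By; exists k.
by move/(negligibleP m (Bmeas k)).
Qed.


Lemma edge_pos l k : edge m A T B l k -> (0 < m (B k))%E.
Proof.
move=> lk; apply: nonsing => //; apply: (lt_le_trans lk).
apply: le_measure; rewrite ?inE; last by move=> x [].
  by apply: measurableI => //; exact: preA_meas.
exact: preA_meas.
Qed.

Lemma mu_ge0 l k : edge m A T B l k -> 0 <= mu k.
Proof.
move=> lk; rewrite leNgt; apply/negP => /adm_neg h.
by have := edge_pos lk; rewrite h ltxx.
Qed.

Lemma reach_le N i j : reachN m A T B N i j -> mu j <= alpha ^+ N * mu i.
Proof.
elim: N j => [|N IH] j /=; first by move=> ->; rewrite expr0 mul1r.
move=> [l [il lj]]; apply: (le_trans (adm_edge lj)).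
rewrite exprS -mulrA; apply: ler_wpM2l; first exact: ltW.
exact: IH.
Qed.

Lemma G_zero k : Gp m A T B k -> mu k = 0.
Proof.
have cyc : forall i, leadsto m A T B i i -> mu i = 0.
  move=> i ii; have [l li] := leadsto_in ii.
  have h0 := mu_ge0 li.
  case/leadstoP: ii => N [N0 /reach_le h].
  have aN : alpha ^+ N < 1 by rewrite exprn_ilt1 ?ltW // -lt0n.
  have aN0 : 0 <= alpha ^+ N by rewrite exprn_ge0 // ltW.
  apply/eqP; rewrite eq_le h0 andbT.
  have : (1 - alpha ^+ N) * mu i <= 0 by rewrite mulrBl mul1r subr_le0.
  by rewrite pmulr_rle0 // subr_gt0.
case=> [/cyc //|[i [ii ik]]].
have [l lk] := leadsto_in ik.
apply/eqP; rewrite eq_le (mu_ge0 lk) andbT.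
case/leadstoP: ik => N [N0 /reach_le h]; by rewrite (cyc _ ii) mulr0 in h.
Qed.

End Adm.

Definition Zset (R : realType) (d : measure_display) (X : measurableType d)
    (m : {measure set X -> \bar R}) (A : set X) (T : X -> X)
    (n : nat) (B : 'I_n -> set X) : set X :=
  [set x | exists k, exists j, Cmat m A T B k j = 0%E /\ B k x /\ preA A T (B j) x].

Lemma Z_negl (R : realType) (d : measure_display) (X : measurableType d)
    (m : {measure set X -> \bar R}) (A : set X) (T : X -> X)
    (n : nat) (B : 'I_n -> set X) :
  measurable A -> measurable_fun A T -> (forall k, measurable (B k)) ->
  m.-negligible (Zset m A T B).
Proof.
move=> mA mT Bm.
apply: (negl_exists (P := fun k => [set x | exists j, Cmat m A T B k j = 0%E /\ B k x /\ preA A T (B j) x])) => k.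
apply: (negl_exists (P := fun j => [set x | Cmat m A T B k j = 0%E /\ B k x /\ preA A T (B j) x])) => j.
have [C0|C0] := pselect (Cmat m A T B k j = 0%E).
  exists (B k `&` preA A T (B j)); split => //.
    by apply: measurableI => //; exact: mT.
  by move=> x [_ [h1 h2]].
exists set0; split => //.
by move=> x [].
Qed.


Lemma aux1 (R : realType) (a : R) : 0 < a -> a < 1 -> 1 <= 2 / a.
Proof. move=> a0 a1; rewrite ler_pdivlMr //; lra. Qed.

Lemma aux2 (R : realType) (a : R) : 0 < a -> a * (2 / a) = 2.
Proof. move=> a0; rewrite mulrC -mulrA mulVf ?mulr1 //; lra. Qed.

Lemma aux3 (R : realType) (x y : R) : 0 < x -> 2 * x <= y -> x < y.
Proof. move=> *; lra. Qed.

Section Main.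
Context (R : realType) (d : measure_display) (X : measurableType d)
    (m : {measure set X -> \bar R}) (A : set X) (T : X -> X) (alpha : R)
    (n : nat) (B : 'I_n -> set X).
Hypothesis mA : measurable A.
Hypothesis mT : measurable_fun A T.
Hypothesis nonsing : forall E, measurable E -> (0 < m (preA A T E))%E -> (0 < m E)%E.
Hypothesis Ainf0 : m (Ainf A T) = 0%E.
Hypothesis a0 : 0 < alpha.
Hypothesis a1 : alpha < 1.
Hypothesis Bmeas : forall k, measurable (B k).
Hypothesis Bdisj : forall k l, k != l -> B k `&` B l = set0.
Hypothesis Bcov : \bigcup_k B k = A.

Lemma part2 lam : admissible m A T alpha B lam ->
  m.-negligible ((\bigcup_(k in Gp m A T B) B k) `&` Msupp A T alpha B lam).
Proof.
move=> adm; have l0 : lam ord0 = 0 by case: adm.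
apply: (negligibleS (mu:=m) _ (Z_negl m mA mT Bmeas)).
move=> x [[k Gk Bk] [Ax /eqP Mx]].
have Gz := G_zero mA mT nonsing Ainf0 a0 a1 Bmeas Bdisj Bcov adm.
have [ATx|nATx] := pselect (A (T x)); last first.
  by exfalso; apply: Mx; rewrite (Mstar_out (T:=T) alpha Bdisj Bcov l0 Bk nATx) Gz // mulr0 oppr0.
have [j Bj] := coverP Bcov ATx.
have [kj|nkj] := pselect (edge m A T B k j).
  exfalso; apply: Mx; rewrite (Mstar_in (T:=T) alpha Bdisj Bcov l0 Bk Bj).
  by rewrite !Gz ?mulr0 ?subr0 //; exact: Gp_edge kj.
exists k, j; split => //.
apply/eqP; rewrite eq_le Cmat_ge0 andbT leNgt; apply/negP => h; exact: nkj.
Qed.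

Definition reachS (k : 'I_n) : {set 'I_n} := [set l | `[< leadsto m A T B k l >]].
Definition rk k := #|reachS k|.
Definition gam : R := 2 / alpha.
Definition mustar (k : 'I_n) : R := if `[< Gp m A T B k >] then 0 else gam ^+ rk k.
Definition lamS (i : 'I_n.+1) : R :=
  match unlift ord0 i with Some k => mustar k | None => 0 end.

Lemma lamS0 : lamS ord0 = 0.
Proof. by rewrite /lamS unlift_none. Qed.

Lemma lamSl k : lamS (lift ord0 k) = mustar k.
Proof. by rewrite /lamS liftK. Qed.

Lemma gam_ge1 : 1 <= gam.
Proof. exact: aux1. Qed.

Lemma agam : alpha * gam = 2.
Proof. exact: aux2. Qed.

Lemma mustarG k : Gp m A T B k -> mustar k = 0.
Proof. by move=> Gk; rewrite /mustar; case: asboolP. Qed.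

Lemma mustarNG k : ~ Gp m A T B k -> mustar k = gam ^+ rk k.
Proof. by move=> Gk; rewrite /mustar; case: asboolP. Qed.

Lemma mustar_pos k : ~ Gp m A T B k -> 0 < mustar k.
Proof.
move=> Gk; rewrite mustarNG // exprn_gt0 //; exact: lt_le_trans ltr01 gam_ge1.
Qed.

Lemma rk_lt k j : ~ Gp m A T B k -> ~ Gp m A T B j -> edge m A T B k j ->
  (rk j < rk k)%N.
Proof.
move=> nGk nGj kj; apply: proper_card; rewrite properE; apply/andP; split.
  apply/fintype.subsetP => l; rewrite !inE => jl.
  exact: (leadsto_cons kj jl).
apply/negP => /fintype.subsetP /(_ j); rewrite !inE => h.
have jj := h (edge_leadsto kj).
by apply: nGj; left.
Qed.

Lemma mustar_lt k j : ~ Gp m A T B k -> ~ Gp m A T B j -> edge m A T B k j ->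
  mustar j < alpha * mustar k.
Proof.
move=> nGk nGj kj; rewrite !mustarNG //.
have hlt := rk_lt nGk nGj kj.
have : gam ^+ (rk j).+1 <= gam ^+ rk k by apply: ler_weXn2l; [exact: gam_ge1|].
rewrite exprS => h.
have p : 0 < gam ^+ rk j by rewrite exprn_gt0 //; exact: lt_le_trans ltr01 gam_ge1.
have : alpha * (gam * gam ^+ rk j) <= alpha * gam ^+ rk k by rewrite ler_pM2l.
rewrite mulrA agam; exact: aux3.
Qed.

Lemma keyS x k : A x -> B k x -> ~ Zset m A T B x ->
  (Gp m A T B k -> Mstar A T alpha B lamS x = 0) /\
  (~ Gp m A T B k -> Mstar A T alpha B lamS x < 0).
Proof.
move=> Ax Bk nZ.
have [ATx|nATx] := pselect (A (T x)); last first.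
  rewrite (Mstar_out (T:=T) alpha Bdisj Bcov lamS0 Bk nATx) lamSl; split => G.
    by rewrite mustarG // mulr0 oppr0.
  by rewrite oppr_lt0 mulr_gt0 // mustar_pos.
have [j Bj] := coverP Bcov ATx.
rewrite (Mstar_in (T:=T) alpha Bdisj Bcov lamS0 Bk Bj) !lamSl.
have [kj|nkj] := pselect (edge m A T B k j); last first.
  exfalso; apply: nZ; exists k, j; split => //.
  apply/eqP; rewrite eq_le Cmat_ge0 andbT leNgt; apply/negP => h; exact: nkj.
split => G.
  by rewrite !mustarG ?mulr0 ?subr0 //; exact: Gp_edge kj.
have [Gj|nGj] := pselect (Gp m A T B j).
  by rewrite mustarG // sub0r oppr_lt0 mulr_gt0 // mustar_pos.
by rewrite subr_lt0 mustar_lt.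
Qed.

Lemma lamS_adm : admissible m A T alpha B lamS.
Proof.
split; first exact: lamS0.
have [N [mN N0 ZN]] := Z_negl m mA mT Bmeas.
apply: (ex_ae mN N0) => x Nx Ax.
have nZ : ~ Zset m A T B x by move=> /ZN.
have [k Bk] := coverP Bcov Ax.
have [h1 h2] := keyS Ax Bk nZ.
have [Gk|nGk] := pselect (Gp m A T B k); first by rewrite h1.
exact/ltW/h2.
Qed.

Lemma part3 S : measurable S ->
  (forall lam, admissible m A T alpha B lam ->
     m.-negligible (Msupp A T alpha B lam `\` S)) ->
  m.-negligible ((A `\` \bigcup_(k in Gp m A T B) B k) `\` S).
Proof.
move=> mS H.
apply: (negligibleS (mu:=m) _ (negligibleU (H _ lamS_adm) (Z_negl m mA mT Bmeas))).
move=> x [[Ax nU] nS].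
have [Zx|nZ] := pselect (Zset m A T B x); first by right.
left; split => //.
have [k Bk] := coverP Bcov Ax.
have [_ h2] := keyS Ax Bk nZ.
have nGk : ~ Gp m A T B k by move=> Gk; apply: nU; exists k.
by split => //; rewrite lt_eqF // h2.
Qed.

End Main.

Theorem lemma6 (R : realType) (d : measure_display) (X : measurableType d)
    (m : {measure set X -> \bar R}) (A : set X) (T : X -> X)
    (alpha : R) (n : nat) (B : 'I_n -> set X) :
  nonsingular_open_system m A T ->
  m (Ainf A T) = 0%E ->
  0 < alpha < 1 ->
  (forall k, measurable (B k)) ->
  (forall k l, k != l -> B k `&` B l = set0) ->
  \bigcup_k B k = A ->
  let U := \bigcup_(k in [set k | leadsto m A T B k k \/
                  exists i, leadsto m A T B i i /\ leadsto m A T B i k]) B k in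
  reduced_domain m A T alpha B U /\ measurable U.
Proof.
move=> [mA [_ [mT [_ [_ [nonsing _]]]]]] Ainf0 /andP[a0 a1] Bmeas Bdisj Bcov U.
split; last by apply: fin_bigcup_measurable => //; exact: finite_finset.
split.
- by move=> x [k _ Bk]; exact: (BsubA Bcov Bk).
- exact: (part2 mA mT nonsing Ainf0 a0 a1 Bmeas Bdisj Bcov).
- exact: (part3 mA mT a0 a1 Bmeas Bdisj Bcov).
Qed.
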